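(* Consider the scalar system $\dot x=u+a(t)x^2$, where $x,u\in\mathbb{R}$. Let $\lambda>0$, $k>0$, $\gamma_a>0$, $\mu(t)=e^{\lambda t}$ and $s=\mu x$. Apply the controller $$u=-(k+\lambda)x-\hat a x^2-\frac{\delta_{\Delta_a}}2x^3-\frac{\delta_{\Delta_a}}2x,\qquad \dot{\hat a}=\gamma_a\,\mu\, s\, x^2.$$ Then, for all initial conditions: 1. $V=\tfrac12 s^2+\tfrac1{2\gamma_a}(\ell_a-\hat a)^2$ satisfies $\dot V\le-ks^2$. 2. All signals $s,\hat a,x,u$ are bounded, and $|x(t)|\le Ce^{-\lambda t}$ for some constant $C$ depending on the initial conditions. 3. $\lim_{t\to\infty}\hat a(t)$ exists.
   Context: $a(t)$ is an unknown, piecewise continuous, time-varying scalar parameter. There is an unknown constant $\ell_a$ and a known constant $\delta_{\Delta_a}>0$ such that $|a(t)-\ell_a|\le\delta_{\Delta_a}$ for all $t\ge0$. *)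

(* Defs.v *)
From Stdlib Require Import Reals List.
From Coquelicot Require Import Coquelicot.
Open Scope R_scope.

Definition piecewise_continuous_nonneg (a : R -> R) : Prop :=
  (forall T : R, exists l : list R,
      forall t, 0 <= t <= T -> ~ In t l -> continuous a t) /\
  (forall t, 0 <= t -> exists r : R, filterlim a (at_right t) (locally r)) /\
  (forall t, 0 < t -> exists r : R, filterlim a (at_left t) (locally r)).

Definition mu (lam t : R) : R := exp (lam * t).

Definition ctrl (k lam delta x ah : R) : R :=
  - (k + lam) * x - ah * x ^ 2 - delta / 2 * x ^ 3 - delta / 2 * x.

(* Main.v *)
Require Import Defs.
From Stdlib Require Import Reals List Lra ClassicalEpsilon.
From Coquelicot Require Import Coquelicot.
Open Scope R_scope.
Lemma loc_pos (t : R) : 0 < t -> locally t (fun y => 0 < y).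
Proof.
  intros H. exists (mkposreal t H). intros y Hy.
  unfold ball in Hy; simpl in Hy; unfold AbsRing_ball, abs, minus, plus, opp in Hy; simpl in Hy.
  destruct (Rabs_def2 _ _ Hy); simpl in *; lra.
Qed.

Lemma ext_int (f F : R -> R) (HF : forall t, 0 <= t -> is_RInt f 0 t (F t - F 0)) :
 (forall y, continuous (fun y => F (Rmax 0 y)) y) /\
 (forall t, 0 < t -> continuous f t -> is_derive (fun y => F (Rmax 0 y)) t (f t)).
Proof.
  pose (fz := fun r => if Rle_dec 0 r then f r else 0).
  assert (HI : forall z, is_RInt fz 0 z (F (Rmax 0 z) - F 0)).
  { intros z. destruct (Rle_dec 0 z) as [Hz|Hz].
    - rewrite Rmax_right by lra. apply is_RInt_ext with f.
      + intros r Hr. rewrite Rmin_left in Hr by lra. unfold fz.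
        destruct (Rle_dec 0 r); [reflexivity| lra].
      + apply HF; lra.
    - rewrite Rmax_left by lra. replace (F 0 - F 0) with (scal (z - 0) 0).
      + apply is_RInt_ext with (fun _ => 0).
        * intros r Hr. rewrite Rmax_left in Hr by lra. unfold fz.
          destruct (Rle_dec 0 r); [lra| reflexivity].
        * exact (@is_RInt_const R_NormedModule 0 z 0).
      + unfold scal; simpl; unfold mult; simpl; ring. }
  split.
  - intros y. 
    apply continuous_ext with (fun z => (F (Rmax 0 z) - F 0) + F 0).
    + intros zz; simpl; ring.
    + apply (continuous_plus (fun z => F (Rmax 0 z) - F 0) (fun _ => F 0)).
      * apply continuous_RInt_1 with fz 0. apply filter_forall. intros; apply HI.
      * apply continuous_const.
  - intros t Ht Hc.
    apply is_derive_ext with (fun z => (F (Rmax 0 z) - F 0) + F 0).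
    + intros zz; simpl; ring.
    + replace (f t) with (plus (fz t) 0).
      * apply (is_derive_plus (fun z => F (Rmax 0 z) - F 0) (fun _ => F 0)).
        -- apply is_derive_RInt with 0. apply filter_forall. intros; apply HI.
           apply continuous_ext_loc with f; [|exact Hc].
           generalize (loc_pos t Ht). apply filter_imp. intros y Hy. unfold fz.
           destruct (Rle_dec 0 y); [reflexivity|lra].
        -- apply is_derive_Reals; apply derivable_pt_lim_const.
      * unfold plus; simpl. unfold fz. destruct (Rle_dec 0 t); [ring|lra].
Qed.

Lemma mono (g : R -> R) (l : list R) : forall p q, p <= q ->
  (forall t, continuous g t) ->
  (forall t, p < t < q -> ~ In t l -> exists d, is_derive g t d /\ d <= 0) ->
  g q <= g p.
Proof.
  induction l as [|c l IH]; intros p q Hpq Hc Hd.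
  - destruct (Req_dec p q) as [E|E]; [subst; lra|].
    assert (pr1 : forall c, p < c < q -> derivable_pt g c).
    { intros c Hcc. destruct (constructive_indefinite_description _ (Hd c Hcc (fun h => h))) as [d [Hd1 _]].
      exists d. apply is_derive_Reals. exact Hd1. }
    assert (pr2 : forall c, p < c < q -> derivable_pt id c).
    { intros c _. apply derivable_pt_id. }
    destruct (MVT g id p q pr1 pr2) as [c [P HP]]; [lra| | |].
    + intros c _. apply continuity_pt_filterlim. apply Hc.
    + intros c _. apply derivable_continuous_pt. apply derivable_pt_id.
    + destruct (Hd c P (fun h => h)) as [d [Hd1 Hd2]].
      rewrite (derive_pt_eq_0 g c d (pr1 c P)) in HP by (apply is_derive_Reals; exact Hd1).
      rewrite (derive_pt_eq_0 id c 1 (pr2 c P)) in HP by apply derivable_pt_lim_id.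
      unfold id in HP. nra.
  - destruct (Rlt_dec p c) as [H1|H1]; [destruct (Rlt_dec c q) as [H2|H2]|].
    + apply Rle_trans with (g c).
      * apply IH; [lra|exact Hc|]. intros t Ht Hn. apply Hd; [lra|]. intros [E|E]; [lra|tauto].
      * apply IH; [lra|exact Hc|]. intros t Ht Hn. apply Hd; [lra|]. intros [E|E]; [lra|tauto].
    + apply IH; [lra|exact Hc|]. intros t Ht Hn. apply Hd; [lra|]. intros [E|E]; [lra|tauto].
    + apply IH; [lra|exact Hc|]. intros t Ht Hn. apply Hd; [lra|]. intros [E|E]; [lra|tauto].
Qed.

Lemma key_ineq (X e m delta k : R) : Rabs e <= delta -> 0 <= m ->
  m * (- k * X ^ 2 + e * X ^ 3 - delta / 2 * (X ^ 4 + X ^ 2)) <= - k * (m * X ^ 2).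
Proof.
  intros He Hm.
  assert (H1 : e * X ^ 3 <= delta * Rabs X ^ 3).
  { apply Rle_trans with (Rabs (e * X ^ 3)). apply Rle_abs.
    rewrite Rabs_mult, <- RPow_abs. apply Rmult_le_compat_r; [apply pow_le, Rabs_pos|exact He]. }
  assert (H2 : Rabs X ^ 3 <= (X ^ 4 + X ^ 2) / 2).
  { assert (E2 : X ^ 2 = Rabs X ^ 2) by (rewrite pow2_abs; reflexivity).
    assert (E4 : X ^ 4 = (X ^ 2) ^ 2) by ring.
    rewrite E4, E2. assert (Hy := Rabs_pos X). set (y := Rabs X) in *.
    assert (0 <= y ^ 2 * (y - 1) ^ 2) by (apply Rmult_le_pos; apply pow2_ge_0).
    nra. }
  assert (Hd : 0 <= delta) by (apply Rle_trans with (Rabs e); [apply Rabs_pos|exact He]).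
  assert (H3 : e * X ^ 3 - delta / 2 * (X ^ 4 + X ^ 2) <= 0) by nra.
  nra.
Qed.

Lemma abs_bound (y B : R) : 0 <= B -> y ^ 2 <= B -> Rabs y <= 1 + B.
Proof.
  intros HB H. rewrite <- pow2_abs in H. assert (Hy := Rabs_pos y).
  set (z := Rabs y) in *. nra.
Qed.

Lemma ctrl_bound k lam delta X H Bs Bh : 0 <= k + lam -> 0 <= delta ->
  Rabs X <= Bs -> Rabs H <= Bh ->
  Rabs (ctrl k lam delta X H) <= (k + lam) * Bs + Bh * Bs ^ 2 + delta / 2 * Bs ^ 3 + delta / 2 * Bs.
Proof.
  intros H1 H2 HX HH. unfold ctrl.
  assert (T : forall p q, Rabs (p - q) <= Rabs p + Rabs q).
  { intros p q. unfold Rminus. eapply Rle_trans; [apply Rabs_triang|]. rewrite Rabs_Ropp. lra. }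
  eapply Rle_trans; [apply T|]. eapply Rle_trans; [apply Rplus_le_compat_r, T|].
  eapply Rle_trans; [apply Rplus_le_compat_r, Rplus_le_compat_r, T|].
  rewrite !Rabs_mult, !Rabs_Ropp, <- !RPow_abs.
  rewrite (Rabs_right (k + lam)) by lra. rewrite (Rabs_right (delta / 2)) by lra.
  assert (Hy := Rabs_pos X). assert (Hh := Rabs_pos H).
  set (y := Rabs X) in *. set (h := Rabs H) in *.
  assert (y ^ 2 <= Bs ^ 2) by (apply pow_incr; lra).
  assert (y ^ 3 <= Bs ^ 3) by (apply pow_incr; lra).
  assert (h * y ^ 2 <= Bh * Bs ^ 2) by (apply Rmult_le_compat; [lra|apply pow_le; lra|lra|lra]).
  assert ((k + lam) * y <= (k + lam) * Bs) by (apply Rmult_le_compat_l; lra).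
  assert (delta / 2 * y ^ 3 <= delta / 2 * Bs ^ 3) by (apply Rmult_le_compat_l; lra).
  assert (delta / 2 * y <= delta / 2 * Bs) by (apply Rmult_le_compat_l; lra).
  lra.
Qed.

Theorem mainTheorem4
  (a : R -> R) (la delta lam k ga : R) (x ah : R -> R)
  (Hpc : piecewise_continuous_nonneg a)
  (Hdelta : 0 < delta)
  (Ha : forall t, 0 <= t -> Rabs (a t - la) <= delta)
  (Hlam : 0 < lam) (Hk : 0 < k) (Hga : 0 < ga)
  (Hx : forall t, 0 <= t ->
     is_RInt (fun r => ctrl k lam delta (x r) (ah r) + a r * x r ^ 2) 0 t (x t - x 0))
  (Hah : forall t, 0 <= t ->
     is_RInt (fun r => ga * mu lam r * (mu lam r * x r) * x r ^ 2) 0 t (ah t - ah 0)) :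
  let s := fun t => mu lam t * x t in
  let u := fun t => ctrl k lam delta (x t) (ah t) in
  let V := fun t => 1 / 2 * s t ^ 2 + 1 / (2 * ga) * (la - ah t) ^ 2 in
  (forall t, 0 < t -> continuous a t ->
     exists d, is_derive V t d /\ d <= - k * s t ^ 2) /\
  (exists M, forall t, 0 <= t ->
     Rabs (s t) <= M /\ Rabs (ah t) <= M /\ Rabs (x t) <= M /\ Rabs (u t) <= M) /\
  (exists C, forall t, 0 <= t -> Rabs (x t) <= C * exp (- lam * t)) /\
  (exists L : R, is_lim ah p_infty (Finite L)).
Proof.
  intros s u V.
  pose (fx := fun r => ctrl k lam delta (x r) (ah r) + a r * x r ^ 2).
  pose (fa := fun r => ga * mu lam r * (mu lam r * x r) * x r ^ 2).
  destruct (ext_int fx x Hx) as [cX dX].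
  destruct (ext_int fa ah Hah) as [cA dA].
  pose (X := fun y => x (Rmax 0 y)). pose (A := fun y => ah (Rmax 0 y)).
  assert (locX : forall t, 0 < t -> locally t (fun y => X y = x y)).
  { intros t Ht. generalize (loc_pos t Ht). apply filter_imp. intros y Hy.
    unfold X. rewrite Rmax_right by lra. reflexivity. }
  assert (locA : forall t, 0 < t -> locally t (fun y => A y = ah y)).
  { intros t Ht. generalize (loc_pos t Ht). apply filter_imp. intros y Hy.
    unfold A. rewrite Rmax_right by lra. reflexivity. }
  assert (cx : forall t, 0 < t -> continuity_pt x t).
  { intros t Ht. apply continuity_pt_filterlim. apply continuous_ext_loc with X.
    apply locX; exact Ht. apply cX. }
  assert (cah : forall t, 0 < t -> continuity_pt ah t).
  { intros t Ht. apply continuity_pt_filterlim. apply continuous_ext_loc with A.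
    apply locA; exact Ht. apply cA. }
  assert (cfa : forall t, 0 < t -> continuity_pt fa t).
  { intros t Ht. specialize (cx t Ht). unfold fa, mu. reg. }
  assert (dah : forall t, 0 < t -> is_derive ah t (fa t)).
  { intros t Ht. apply is_derive_ext_loc with A. apply locA; exact Ht.
    apply dA; [exact Ht|]. apply continuity_pt_filterlim, cfa, Ht. }
  assert (P1 : forall t, 0 < t -> continuous a t ->
     exists d, is_derive V t d /\ d <= - k * s t ^ 2).
  { intros t Ht Hc.
    assert (cfx : continuity_pt fx t).
    { specialize (cx t Ht). specialize (cah t Ht).
      apply continuity_pt_filterlim in Hc. unfold fx, ctrl. reg. }
    assert (dx : is_derive x t (fx t)).
    { apply is_derive_ext_loc with X. apply locX; exact Ht.
      apply dX; [exact Ht|]. apply continuity_pt_filterlim, cfx. }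
    exists (mu lam t * x t * (lam * mu lam t * x t + mu lam t * fx t) - 1 / ga * (la - ah t) * fa t).
    split.
    - unfold V, s, mu. auto_derive.
      + split; [exists (fx t); exact dx|split; [exists (fa t); apply dah; exact Ht|exact I]].
        replace (Derive (fun x0 : R => x x0) t) with (fx t) by (symmetry; apply is_derive_unique; exact dx). replace (Derive (fun x0 : R => ah x0) t) with (fa t) by (symmetry; apply is_derive_unique; apply dah; exact Ht).
        field. lra.
    - unfold fx, fa, ctrl, s.
      assert (Hm : 0 <= mu lam t ^ 2) by apply pow2_ge_0.
      generalize (key_ineq (x t) (a t - la) (mu lam t ^ 2) delta k (Ha t (Rlt_le _ _ Ht)) Hm).
      intros HH. 
      replace (- k * (mu lam t * x t) ^ 2) with (- k * (mu lam t ^ 2 * x t ^ 2)) by ring.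
      eapply Rle_trans; [|exact HH]. right. field. lra. }

  split; [exact P1|].
  pose (Ve := fun t => 1/2 * (mu lam t * X t)^2 + 1/(2*ga) * (la - A t)^2).
  assert (cVe : forall y, continuous Ve y).
  { intros y. apply continuity_pt_filterlim.
    assert (h1 : continuity_pt X y) by (apply continuity_pt_filterlim; apply cX).
    assert (h2 : continuity_pt A y) by (apply continuity_pt_filterlim; apply cA).
    unfold Ve, mu. reg. }
  assert (Vdec : forall t, 0 <= t -> V t <= V 0).
  { intros T HT. destruct (proj1 Hpc T) as [l Hl].
    assert (HH : Ve T <= Ve 0).
    { apply (mono Ve l 0 T HT cVe). intros t Ht Hn.
      destruct (P1 t (proj1 Ht) (Hl t (conj (Rlt_le _ _ (proj1 Ht)) (Rlt_le _ _ (proj2 Ht))) Hn)) as [d [Hd1 Hd2]].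
      exists d; split.
      - apply is_derive_ext_loc with V; [|exact Hd1].
        generalize (loc_pos t (proj1 Ht)). apply filter_imp. intros y Hy.
        unfold Ve, V, s, X, A. rewrite Rmax_right by lra. reflexivity.
      - assert (0 <= s t ^ 2) by apply pow2_ge_0. nra. }
    unfold Ve, X, A in HH. rewrite !Rmax_right in HH by lra. exact HH. }
  set (V0 := V 0) in *.
  assert (HV0 : 0 <= V0).
  { unfold V0, V. assert (0 <= s 0 ^ 2) by apply pow2_ge_0.
    assert (0 <= (la - ah 0) ^ 2) by apply pow2_ge_0.
    assert (0 < 1 / (2 * ga)) by (apply Rdiv_lt_0_compat; lra). nra. }
  pose (Bs := 1 + 2 * V0). pose (Bh := Rabs la + (1 + 2 * ga * V0)).
  assert (Es : forall t, 0 <= t -> Rabs (s t) <= Bs).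
  { intros t Ht. specialize (Vdec t Ht). unfold V in Vdec.
    assert (0 <= (la - ah t) ^ 2) by apply pow2_ge_0.
    assert (0 < 1 / (2 * ga)) by (apply Rdiv_lt_0_compat; lra).
    apply abs_bound; [lra|]. nra. }
  assert (Eh : forall t, 0 <= t -> Rabs (ah t) <= Bh).
  { intros t Ht. specialize (Vdec t Ht). unfold V in Vdec.
    assert (0 <= s t ^ 2) by apply pow2_ge_0.
    assert (Hq : 1 / (2 * ga) * (la - ah t) ^ 2 <= V0) by lra.
    assert (Hq2 : (la - ah t) ^ 2 <= 2 * ga * V0).
    { replace ((la - ah t) ^ 2) with (2 * ga * (1 / (2 * ga) * (la - ah t) ^ 2)) by (field; lra).
      apply Rmult_le_compat_l; lra. }
    assert (Hb := abs_bound (la - ah t) (2 * ga * V0) ltac:(nra) Hq2).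
    unfold Bh. replace (ah t) with (la - (la - ah t)) by ring.
    unfold Rminus at 1. eapply Rle_trans; [apply Rabs_triang|]. rewrite Rabs_Ropp. lra. }
  assert (muE : forall t, mu lam t * exp (- lam * t) = 1).
  { intros t. unfold mu. rewrite <- exp_plus. replace (lam * t + - lam * t) with 0 by ring. apply exp_0. }
  assert (xs : forall t, x t = s t * exp (- lam * t)).
  { intros t. unfold s. rewrite (Rmult_comm (mu lam t) (x t)), Rmult_assoc, muE. ring. }
  assert (Eineq : forall t, exp (- lam * t) * (1 + lam * t) <= 1).
  { intros t. assert (h := exp_ineq1_le (lam*t)). assert (m := muE t). unfold mu in m.
    assert (Hp := exp_pos (-lam*t)). nra. }
  assert (E1 : forall t, 0 <= t -> exp (- lam * t) <= 1).
  { intros t Ht. specialize (Eineq t). assert (Hp := exp_pos (- lam * t)).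
    assert (0 <= lam * t) by nra. nra. }
  assert (Ex : forall t, 0 <= t -> Rabs (x t) <= Bs * exp (- lam * t)).
  { intros t Ht. rewrite xs, Rabs_mult, (Rabs_right (exp _)) by (apply Rle_ge, Rlt_le, exp_pos).
    apply Rmult_le_compat_r; [apply Rlt_le, exp_pos|apply Es; exact Ht]. }
  assert (Bs0 : 0 <= Bs) by (unfold Bs; lra).
  assert (Bh0 : 0 <= Bh) by (unfold Bh; assert (Hl := Rabs_pos la); nra).
  split.
  { pose (Bu := (k + lam) * Bs + Bh * Bs ^ 2 + delta / 2 * Bs ^ 3 + delta / 2 * Bs).
    assert (Bu0 : 0 <= Bu).
    { unfold Bu. assert (0 <= Bs ^ 2) by (apply pow_le; lra). assert (0 <= Bs ^ 3) by (apply pow_le; lra).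
      assert (0 <= Bh * Bs ^ 2) by (apply Rmult_le_pos; lra). nra. }
    exists (Bs + Bh + Bu). intros t Ht.
    assert (Hxt : Rabs (x t) <= Bs).
    { eapply Rle_trans; [apply Ex; exact Ht|]. specialize (E1 t Ht). assert (Hp := exp_pos (- lam * t)). nra. }
    specialize (Es t Ht). specialize (Eh t Ht).
    assert (Hu : Rabs (u t) <= Bu) by (apply ctrl_bound; lra).
    lra. }
  split.
  { exists Bs. exact Ex. }
  pose (c := ga * Bs ^ 3 / lam).
  assert (c0 : 0 <= c) by (unfold c; apply Rmult_le_pos; [apply Rmult_le_pos; [lra|apply pow_le; lra]|apply Rlt_le, Rinv_0_lt_compat; lra]).
  assert (clam : c * lam = ga * Bs ^ 3) by (unfold c; field; lra).
  assert (fab : forall t, 0 <= t -> Rabs (fa t) <= ga * Bs ^ 3 * exp (- lam * t)).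
  { intros t Ht. assert (Heq : fa t = ga * s t ^ 3 * exp (- lam * t)).
    { unfold fa, s. replace (ga * (mu lam t * x t) ^ 3 * exp (- lam * t)) with
        (ga * mu lam t * (mu lam t * x t) * x t ^ 2 * (mu lam t * exp (- lam * t))) by ring.
      rewrite muE. ring. }
    rewrite Heq, !Rabs_mult, <- RPow_abs, (Rabs_right ga) by lra.
    rewrite (Rabs_right (exp _)) by (apply Rle_ge, Rlt_le, exp_pos).
    apply Rmult_le_compat_r; [apply Rlt_le, exp_pos|]. apply Rmult_le_compat_l; [lra|].
    apply pow_incr. split; [apply Rabs_pos|apply Es; exact Ht]. }
  assert (dA' : forall t, 0 < t -> is_derive A t (fa t)).
  { intros t Ht. apply is_derive_ext_loc with ah; [|apply dah; exact Ht].
    generalize (locA t Ht). apply filter_imp. intros y Hy; symmetry; exact Hy. }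
  assert (cauch : forall t1 t2, 0 <= t1 <= t2 -> Rabs (ah t2 - ah t1) <= c * exp (- lam * t1)).
  { intros t1 t2 Ht.
    assert (Hphi : A t2 + c * exp (- lam * t2) <= A t1 + c * exp (- lam * t1)).
    { apply (mono (fun t => A t + c * exp (- lam * t)) nil); [lra| |].
      - intros y. apply continuity_pt_filterlim.
        assert (h2 : continuity_pt A y) by (apply continuity_pt_filterlim; apply cA). reg.
      - intros t Htt _. exists (fa t - c * lam * exp (- lam * t)). split.
        + auto_derive.
          * exists (fa t); apply dA'; lra.
          * replace (Derive (fun x0 : R => A x0) t) with (fa t) by (symmetry; apply is_derive_unique; apply dA'; lra). ring.
        + rewrite clam. assert (HH := fab t ltac:(lra)). apply Rabs_le_between in HH. lra. }
    assert (Hpsi : c * exp (- lam * t2) - A t2 <= c * exp (- lam * t1) - A t1).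
    { apply (mono (fun t => c * exp (- lam * t) - A t) nil); [lra| |].
      - intros y. apply continuity_pt_filterlim.
        assert (h2 : continuity_pt A y) by (apply continuity_pt_filterlim; apply cA). reg.
      - intros t Htt _. exists (- c * lam * exp (- lam * t) - fa t). split.
        + auto_derive.
          * exists (fa t); apply dA'; lra.
          * replace (Derive (fun x0 : R => A x0) t) with (fa t) by (symmetry; apply is_derive_unique; apply dA'; lra). ring.
        + replace (- c * lam * exp (- lam * t)) with (- (c * lam) * exp (- lam * t)) by ring.
          rewrite clam. assert (HH := fab t ltac:(lra)). apply Rabs_le_between in HH. lra. }
    unfold A in Hphi, Hpsi. rewrite !Rmax_right in Hphi, Hpsi by lra.
    assert (Hp := exp_pos (- lam * t2)). assert (0 <= c * exp (- lam * t2)) by (apply Rmult_le_pos; lra).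
    apply Rabs_le. lra. }
  assert (Hcv : exists y : R, filterlim ah (Rbar_locally' p_infty) (locally y)).
  { apply (proj1 (filterlim_locally_cauchy (F := Rbar_locally' p_infty) ah)).
    intros eps. pose (T := c / (lam * eps)).
    assert (T0 : 0 <= T) by (unfold T; apply Rmult_le_pos; [lra|apply Rlt_le, Rinv_0_lt_compat; apply Rmult_lt_0_compat; [lra|apply cond_pos]]).
    exists (fun t => T < t). split.
    - exists T. intros y Hy. exact Hy.
    - assert (key : forall t1 t2, T < t1 <= t2 -> Rabs (ah t2 - ah t1) < eps).
      { intros t1 t2 Ht. eapply Rle_lt_trans; [apply cauch; lra|].
        assert (He := Eineq t1). assert (Hp := exp_pos (- lam * t1)).
        assert (Heps := cond_pos eps).
        assert (HT : lam * T * eps = c) by (unfold T; field; split; lra).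
        assert (lam * T < lam * t1) by (apply Rmult_lt_compat_l; lra).
        assert (c * exp (- lam * t1) * (1 + lam * t1) <= c) by (rewrite Rmult_assoc; apply Rmult_le_compat_l with (r := c) in He; lra).
        assert (c < eps * (1 + lam * t1)) by nra.
        nra. }
      intros u0 v0 Hu Hv. unfold ball; simpl; unfold AbsRing_ball, abs, minus, plus, opp; simpl.
      destruct (Rle_dec u0 v0).
      + apply key; lra.
      + rewrite <- Rabs_Ropp. replace (- (ah v0 + - ah u0)) with (ah u0 - ah v0) by ring. apply key; lra. }
  destruct Hcv as [y Hy]. exists y. exact Hy.
Qed.
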